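(* Assume the following setting. Let $(E,\mathcal{E},\mu)$ be a non-atomic $\sigma$-finite measure space with $\mu(E)=\infty$. Let $(a_n)_{n\ge1}$ be positive numbers with $a_n\to\infty$ and $a_n=o(n)$. For each $n$ let $P_n$ be a probability measure on $(E,\mathcal{E})$ such that $\mu_n:=(n/a_n)P_n$ satisfies $\mu_n(B)\le\mu_{n+1}(B)$ and $\mu_n(B)\to\mu(B)$ for every $B\in\mathcal{E}$. Let $k_1,k_2\in\mathbb{N}_+$, $f\in L^2(\mu^{k_1})$, $g\in L^2(\mu^{k_2})$ and $0\le l\le\min(k_1,k_2)$. Then for every $n\in\mathbb{N}_+$, $$|F_l^{(n)}(f,g)|\le\|f\|_{L^2(\mu^{k_1})}\,\|g\|_{L^2(\mu^{k_2})}.$$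
   Context: Write $f\otimes g(x_1,\dots,x_{k_1+k_2})=f(x_1,\dots,x_{k_1})g(x_{k_1+1},\dots,x_{k_1+k_2})$. A diagram with $l$ edges is an edge set $\mathcal{N}=\{(j_1,j_1'),\dots,(j_l,j_l')\}$ with $1\le j_s\le k_1$, $k_1+1\le j_s'\le k_1+k_2$, the $j_s$ pairwise distinct and the $j_s'$ pairwise distinct; let $\mathcal{B}(l)$ be the set of all such diagrams, so $|\mathcal{B}(l)|=\frac{k_1!k_2!}{(k_1-l)!(k_2-l)!l!}$. For $\mathcal{N}\in\mathcal{B}(l)$, $(f\otimes g)_{\mathcal{N}}$ is the function of $k_1+k_2-l$ variables obtained from $f\otimes g$ by setting $x_{j_s}=x_{j_s'}$ for $s=1,\dots,l$ (for $l=0$ it is $f\otimes g$). Define $$F_l^{(n)}(f,g)=\Big(\frac{n}{a_n}\Big)^{(k_1+k_2)/2}\int_{E^{k_1+k_2-l}}\frac1{|\mathcal{B}(l)|}\sum_{\mathcal{N}\in\mathcal{B}(l)}(f\otimes g)_{\mathcal{N}}\,dP_n^{k_1+k_2-l}.$$ $\mu^k$, $P_n^k$ denote $k$-fold product measures. *)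

(* Defs.v *)
From HB Require Import structures.
From mathcomp Require Import all_boot all_order all_algebra.
From mathcomp Require Import all_classical all_reals all_analysis.
Set Implicit Arguments. Unset Strict Implicit. Unset Printing Implicit Defensive.
Import Order.TTheory GRing.Theory Num.Theory.
Local Open Scope classical_set_scope.
Local Open Scope ring_scope.

(* [nu] is the m-fold product measure [mu^m] on [m.-tuple T] (whose
   sigma-algebra is the product sigma-algebra generated by the coordinates):
   it gives measurable rectangles the product of the measures of the sides
   (convention 0 * oo = 0).  For sigma-finite [mu] such [nu] exists and is
   unique on the product sigma-algebra. *)
Definition is_product_measure d (T : measurableType d) (R : realType)
    (mu : set T -> \bar R) (m : nat) (nu : set (m.-tuple T) -> \bar R) :=
  forall A : 'I_m -> set T, (forall i, measurable (A i)) ->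
    nu [set x | forall i, A i (tnth x i)] = (\prod_(i < m) mu (A i))%E.

Definition nonatomic d (T : measurableType d) (R : realType)
    (mu : set T -> \bar R) :=
  forall A, measurable A -> (0 < mu A)%E ->
    exists2 B, measurable B /\ B `<=` A & (0 < mu B)%E /\ (mu B < mu A)%E.

Definition tens (T : Type) (R : Type) (k1 k2 : nat) (mulR : R -> R -> R)
  (f : k1.-tuple T -> R) (g : k2.-tuple T -> R) (x : (k1 + k2).-tuple T) : R :=
  mulR (f [tuple tnth x (lshift k2 i) | i < k1])
       (g [tuple tnth x (rshift k1 i) | i < k2]).

(* Diagrams with l edges.  An edge (j, j') with j : 'I_k1, j' : 'I_k2 stands
   for the pair of variables (x_(j+1), x_(k1+j'+1)) of the paper. *)
Definition diagrams (k1 k2 l : nat) : {set {set 'I_k1 * 'I_k2}} :=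
  [set N : {set 'I_k1 * 'I_k2} | (#|N| == l) &&
     [forall p in N, forall q in N, ((p.1 == q.1) || (p.2 == q.2)) ==> (p == q)]].

Definition kept (k1 k2 : nat) (N : {set 'I_k1 * 'I_k2}) : {set 'I_(k1 + k2)} :=
  [set i : 'I_(k1 + k2) | ~~ [exists p in N, i == rshift k1 p.2]].

(* representative variable: x_{j'} is identified with x_j *)
Definition rep (k1 k2 : nat) (N : {set 'I_k1 * 'I_k2}) (i : 'I_(k1 + k2)) :
    'I_(k1 + k2) :=
  match [pick p in N | i == rshift k1 p.2] with
  | Some p => lshift k2 p.1
  | None => i
  end.

(* (h)_N : function of the #|kept N| (= k1 + k2 - l) kept variables, the
   kept variables being listed in increasing order of index. *)
Definition contract d (T : measurableType d) (R : Type) (k1 k2 : nat)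
    (N : {set 'I_k1 * 'I_k2}) (h : (k1 + k2).-tuple T -> R)
    (y : #|kept N|.-tuple T) : R :=
  h [tuple nth point (tval y) (index (rep N i) (enum (kept N))) | i < k1 + k2].

(* F_l^(n)(f, g); Pn m is the m-fold product measure P_n^m *)
Definition Fln d (T : measurableType d) (R : realType) (n : nat) (an : R)
    (Pn : forall m : nat, {measure set (m.-tuple T) -> \bar R})
    (k1 k2 l : nat) (f : k1.-tuple T -> R) (g : k2.-tuple T -> R) : \bar R :=
  ((powR (n%:R / an) ((k1 + k2)%:R / 2))%:E *
   ((#|diagrams k1 k2 l|%:R)^-1)%:E *
   \sum_(N in diagrams k1 k2 l)
      \int[Pn #|kept N|]_y (@contract _ _ _ k1 k2 N (tens *%R f g) y)%:E)%E.

(* Main.v *)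
Require Import Defs.
From HB Require Import structures.
From mathcomp Require Import all_boot all_order all_algebra.
From mathcomp Require Import all_classical all_reals all_analysis.
From mathcomp Require Import measurable_realfun.
Import Order.TTheory GRing.Theory Num.Theory.
Unset Printing Implicit Defensive.
Local Open Scope classical_set_scope.
Local Open Scope ring_scope.

Section Tup.
Context d (T : measurableType d) (R : realType).

Definition rect {k} (A : 'I_k -> set T) : set (k.-tuple T) :=
  [set x | forall i, A i (tnth x i)].

Definition rects k : set (set (k.-tuple T)) :=
  [set X | exists A : 'I_k -> set T, (forall i, measurable (A i)) /\ X = rect A].

Lemma rect_measurable k (A : 'I_k -> set T) :
  (forall i, measurable (A i)) -> measurable (rect A).
Proof.
move=> mA.
have -> : rect A = \bigcap_(i in [set: 'I_k]) ((fun x : k.-tuple T => tnth x i) @^-1` A i).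
  by apply/seteqP; split => x /= H i //; [move=> _; exact: H | exact: H].
apply: fin_bigcap_measurable; first exact: finite_finset.
move=> i _; rewrite -[X in measurable X]setTI.
exact: (measurable_tnth i measurableT (mA i)).
Qed.

Lemma rects_gen k : (measurable : set (set (k.-tuple T))) = <<s rects k >>.
Proof.
apply/seteqP; split; last first.
  apply: smallest_sub; first exact: sigma_algebra_measurable.
  by move=> _ [A [mA ->]]; exact: rect_measurable.
rewrite /measurable /=.
apply: smallest_sub; first exact: smallest_sigma_algebra.
move=> X; case: k X => [|k] X.
  by rewrite big_ord0.
rewrite -bigcup_mkord_ord => -[i _ [B mB <-]].
apply: sub_sigma_algebra.
exists (fun j => if j == inord i then B else setT); split.
  by move=> j; case: ifP.
apply/seteqP; split => x /=.
  by move=> [_ Bx] j; case: ifPn => // /eqP ->.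
by move=> H; split => //; have := H (inord i); rewrite eqxx.
Qed.

Lemma rects_setI k : setI_closed (rects k).
Proof.
move=> _ _ [A [mA ->]] [B [mB ->]].
exists (fun i => A i `&` B i); split; first by move=> i; exact: measurableI.
by apply/seteqP; split => x /=; [move=> [HA HB] i; split|move=> H; split => i; case: (H i)].
Qed.


Lemma cover_tuple k (F : nat -> set T) :
  {homo F : n m / (n <= m)%N >-> (n <= m)%O} -> [set: T] = \bigcup_n F n ->
  \bigcup_n rect (fun _ : 'I_k => F n) = [set: k.-tuple T].
Proof.
move=> ndF FT; apply/seteqP; split => // x _.
suff [n Hn] : exists n, forall y, y \in (tval x) -> F n y.
  by exists n => // i /=; apply: Hn; exact: mem_tnth.
elim: (tval x) => [|y s [n Hn]]; first by exists 0%N.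
have : [set: T] y by [].
rewrite FT => -[n' _ Fy].
exists (maxn n n') => z; rewrite inE => /orP[/eqP ->|zs].
  by move: Fy; apply/subsetPset/ndF/leq_maxr.
by move: (Hn z zs); apply/subsetPset/ndF/leq_maxl.
Qed.

Local Open Scope ereal_scope.

Lemma prod_unique (m : {measure set T -> \bar R}) : sigma_finite setT m ->
  forall k (nu nu' : {measure set (k.-tuple T) -> \bar R}),
  is_product_measure m nu -> is_product_measure m nu' ->
  forall X, measurable X -> nu X = nu' X.
Proof.
move=> /sigma_finiteP [F [FT ndF mF]] k nu nu' Hnu Hnu' X mX.
apply: (measure_unique (rects k) (fun n => rect (fun _ : 'I_k => F n)))
  => //.
- exact: rects_gen.
- exact: rects_setI.
- by move=> n; exists (fun _ => F n); split => // i; case: (mF n).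
- exact: cover_tuple.
- by move=> _ [A [mA ->]]; rewrite Hnu // Hnu'.
- move=> n; rewrite Hnu; last by move=> i; case: (mF n).
  rewrite -ge0_fin_numE ?prode_ge0 //; apply: prode_fin_num => i _.
  by case: (mF n) => _ h; rewrite ge0_fin_numE.
Qed.

End Tup.
Arguments rect {d T k}.
Arguments rects {d} T k.
Arguments prod_unique {d T R m} _ {k nu nu'} _ _ {X}.
Arguments cover_tuple {d T k F}.
Arguments rect_measurable {d T k A}.

Section TupFubini.
Context d (T : measurableType d) (R : realType).
Local Open Scope ereal_scope.
Variable m : {sigma_finite_measure set T -> \bar R}.
Variable k : nat.
Variables (nu : {measure set (k.-tuple T) -> \bar R})
  (nu1 : {measure set (k.+1.-tuple T) -> \bar R}).
Hypotheses (Hnu : is_product_measure m nu) (Hnu1 : is_product_measure m nu1).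

Let nu_sf : sigma_finite setT nu.
Proof.
have /sigma_finiteP [F [FT ndF mF]] := sigma_finiteT m.
exists (fun n => rect (fun _ : 'I_k => F n)); first by rewrite cover_tuple.
move=> n; split; first by apply: rect_measurable => i; case: (mF n).
rewrite Hnu; last by move=> i; case: (mF n).
rewrite -ge0_fin_numE ?prode_ge0 //; apply: prode_fin_num => i _.
by case: (mF n) => _ h; rewrite ge0_fin_numE.
Qed.

Definition nuS : set (k.-tuple T) -> \bar R := nu.
HB.instance Definition _ := Measure.on nuS.
HB.instance Definition _ := Measure_isSigmaFinite.Build _ _ _ nuS nu_sf.

Definition cons_t (p : T * k.-tuple T) : k.+1.-tuple T := [tuple of p.1 :: p.2].

Lemma measurable_cons_t : measurable_fun setT cons_t.
Proof. exact: measurable_cons measurable_fst measurable_snd. Qed.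

Definition pf := pushforward (m \x nuS) cons_t.

Lemma pf_prod : is_product_measure m pf.
Proof.
move=> A mA; rewrite /pf /pushforward.
have -> : cons_t @^-1` [set x | forall i, A i (tnth x i)] =
   A ord0 `*` rect (fun i : 'I_k => A (lift ord0 i)).
  apply/seteqP; split => -[x t] /=.
    move=> H; split; first by have := H ord0; rewrite tnth0.
    by move=> i; have := H (lift ord0 i); rewrite tnthS.
  move=> [H0 H] i; case: (unliftP ord0 i) => [j ->|->].
    by rewrite tnthS; exact: H.
  by rewrite tnth0.
rewrite product_measure1E //; last exact: rect_measurable.
by rewrite /nuS Hnu // big_ord_recl.
Qed.


Lemma tup_fubini (phi : k.+1.-tuple T -> \bar R) :
  measurable_fun setT phi -> (forall x, 0 <= phi x) ->
  \int[nu1]_y phi y = \int[m]_x \int[nu]_t phi [tuple of x :: t].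
Proof.
move=> mphi phi0.
rewrite (eq_measure_integral pf); [exact: measurable_cons_t|move=> mc|]; last first.
  by move=> mc A mA _; exact: (prod_unique (sigma_finiteT m) Hnu1 pf_prod mA).
rewrite /pf ge0_integral_pushforward //.
rewrite preimage_setT fubini_tonelli1 // => [|x]; [exact: measurableT_comp|exact: phi0].
Qed.

Lemma tup_fubini_measurable (phi : k.+1.-tuple T -> \bar R) :
  measurable_fun setT phi -> (forall x, 0 <= phi x) ->
  measurable_fun setT (fun x => \int[nu]_t phi [tuple of x :: t]).
Proof.
move=> mphi phi0.
have := @measurable_fun_fubini_tonelli_F _ _ T _ R nuS (fun p => phi (cons_t p)).
apply => //; apply: measurableT_comp => //; exact: measurable_cons_t.
Qed.

End TupFubini.
Arguments tup_fubini {d T R m k nu nu1} Hnu Hnu1 {phi}.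
Arguments tup_fubini_measurable {d T R m k nu} Hnu {phi}.
Section Compare.
Context d (T : measurableType d) (R : realType).
Local Open Scope ereal_scope.
Variables m1 m2 : {sigma_finite_measure set T -> \bar R}.
Hypothesis m12 : forall A, measurable A -> m1 A <= m2 A.
Variables (nu1 nu2 : forall k, {measure set (k.-tuple T) -> \bar R}).
Hypotheses (H1 : forall k, is_product_measure m1 (nu1 k))
  (H2 : forall k, is_product_measure m2 (nu2 k)).

Lemma tup_compare k (phi : k.-tuple T -> \bar R) :
  measurable_fun setT phi -> (forall x, 0 <= phi x) ->
  \int[nu1 k]_y phi y <= \int[nu2 k]_y phi y.
Proof.
elim: k phi => [|k IH] phi mphi phi0.
  rewrite (eq_measure_integral (nu2 0)) // => A mA _.
  have hT (nu : {measure set (0.-tuple T) -> \bar R}) (m : {measure set T -> \bar R}) :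
      is_product_measure m nu -> nu setT = 1.
    move=> Hn; have := Hn (fun _ => setT) (fun _ => measurableT).
    rewrite big_ord0 => <-; congr (nu _); apply/seteqP; split => x //= _ [] //.
  have [At|An] := pselect (A [tuple]).
    have -> : A = setT.
      by apply/seteqP; split => // x _; rewrite (tuple0 x).
    by rewrite (hT _ _ (H1 0)) (hT _ _ (H2 0)).
  have -> : A = set0.
    by apply/seteqP; split => // x; rewrite (tuple0 x).
  by rewrite !measure0.
have mc x : measurable_fun setT (fun t : k.-tuple T => [tuple of x :: t]).
  exact: (@measurable_cons _ _ (k.-tuple T) T (cst x) k id (measurable_cst x) (@measurable_id _ _ setT)).
have mphic x : measurable_fun setT (fun t : k.-tuple T => phi [tuple of x :: t]).
  exact: measurableT_comp mphi (mc x).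
rewrite (tup_fubini (H1 k) (H1 k.+1)) // (tup_fubini (H2 k) (H2 k.+1)) //.
apply: (@le_trans _ _ (\int[m1]_x \int[nu2 k]_t phi [tuple of x :: t])).
  apply: ge0_le_integral => //.
  - by move=> x _; apply: integral_ge0 => t _.
  - exact: (tup_fubini_measurable (H1 k)).
  - exact: (tup_fubini_measurable (H2 k)).
  - by move=> x _; apply: IH.
apply: ge0_le_measure_integral => //.
- by move=> x; apply: integral_ge0 => t _.
- exact: (tup_fubini_measurable (H2 k)).
Qed.

End Compare.

Section Select.
Context d (T : measurableType d) (R : realType).
Local Open Scope ereal_scope.
Variable m : {measure set T -> \bar R}.
Hypothesis mT : m setT = 1.
Variables (k M : nat) (s : 'I_k -> 'I_M).
Hypothesis s_inj : injective s.

Definition sel (y : M.-tuple T) : k.-tuple T := [tuple tnth y (s i) | i < k].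

Lemma measurable_sel : measurable_fun setT sel.
Proof.
apply/measurable_fun_tnthP => i.
have -> : (fun x => tnth x i) \o sel = (fun y : M.-tuple T => tnth y (s i)).
  by apply/funext => y /=; rewrite tnth_mktuple.
exact: measurable_tnth.
Qed.

Variable nu : {measure set (M.-tuple T) -> \bar R}.
Hypothesis Hnu : is_product_measure m nu.

Lemma sel_prod : is_product_measure m (pushforward nu sel).
Proof.
move=> A mA; rewrite /pushforward.
pose B j := if [pick i | s i == j] is Some i then A i else setT.
have Bs i : B (s i) = A i.
  rewrite /B; case: pickP => [i' /eqP /s_inj -> //|/(_ i)].
  by rewrite eqxx.
have mB j : measurable (B j).
  by rewrite /B; case: pickP.
have -> : sel @^-1` [set x | forall i, A i (tnth x i)] = rect B.
  apply/seteqP; split => y /=.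
    move=> H j; rewrite /B; case: pickP => // i /eqP <-.
    by have := H i; rewrite tnth_mktuple.
  by move=> H i; rewrite tnth_mktuple -Bs; exact: H.
rewrite Hnu // (bigID (fun j => j \in [set s i | i in 'I_k]%SET)) /=.
rewrite [X in _ * X]big1 ?mule1; last first.
  move=> j /imsetP Hj; rewrite /B; case: pickP => [i /eqP Hi|_]; last exact: mT.
  by exfalso; apply: Hj; exists i.
rewrite (big_imset _ (h := s) (A := 'I_k)) /=; last by move=> x y _ _; exact: s_inj.
by apply: eq_bigr => i _; rewrite Bs.
Qed.

End Select.
Arguments sel {d T k M} s y.
Arguments measurable_sel {d T k M} s.
Arguments sel_prod {d T R m} mT {k M s} s_inj {nu} Hnu.

Section Diag.
Variables (k1 k2 l : nat) (N : {set 'I_k1 * 'I_k2}).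
Hypothesis HN : N \in diagrams k1 k2 l.

Lemma lrshift_neq (i : 'I_k1) (j : 'I_k2) : lshift k2 i != rshift k1 j.
Proof.
apply/negP => /eqP/(congr1 val) /= H.
by have := ltn_ord i; rewrite H ltnNge leq_addr.
Qed.

Lemma diag_prop p q : p \in N -> q \in N -> p.1 == q.1 -> p = q.
Proof.
move: HN; rewrite inE => /andP [_ /forall_inP H] pN qN e.
by have /forall_inP/(_ q qN) := H p pN; rewrite e /= => /eqP.
Qed.

Lemma rep_kept i : rep N i \in kept N.
Proof.
rewrite /rep; case: pickP => [p /andP [pN _]|H].
  rewrite inE; apply/negP => /existsP [q /andP [_ /eqP E]].
  by move/eqP: (lrshift_neq p.1 q.2).
rewrite inE; apply/negP => /existsP [q /andP [qN /eqP E]].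
by have := H q; rewrite qN E eqxx.
Qed.

Lemma idx_lt i : (index (rep N i) (enum (kept N)) < #|kept N|)%N.
Proof. by rewrite cardE index_mem mem_enum rep_kept. Qed.

Definition idx i : 'I_#|kept N| := Ordinal (idx_lt i).

Lemma idx_inj i j : idx i = idx j -> rep N i = rep N j.
Proof.
move/(congr1 val) => /= E.
have mi : rep N i \in enum (kept N) by rewrite mem_enum rep_kept.
have mj : rep N j \in enum (kept N) by rewrite mem_enum rep_kept.
by rewrite -(nth_index (rep N i) mi) E (nth_index _ mj).
Qed.

Lemma rep_l i : rep N (lshift k2 i) = lshift k2 i.
Proof.
rewrite /rep; case: pickP => // p /andP [_ /eqP E].
by move/eqP: (lrshift_neq i p.2).
Qed.

Lemma rep_r_inj i j : rep N (rshift k1 i) = rep N (rshift k1 j) -> i = j.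
Proof.
rewrite /rep; case: pickP => [p /andP [pN /eqP ep]|Hn];
  case: pickP => [q /andP [qN /eqP eq]|Hm].
- move/lshift_inj => e; have epq := diag_prop _ _ pN qN (introT eqP e).
  by apply: (@rshift_inj k1 k2); rewrite ep eq epq.
- by move=> E; move/eqP: (lrshift_neq p.1 j); rewrite E.
- by move=> E; move/eqP: (lrshift_neq q.1 i); rewrite E.
- exact: rshift_inj.
Qed.

Definition s1 (i : 'I_k1) := idx (lshift k2 i).
Definition s2 (j : 'I_k2) := idx (rshift k1 j).

Lemma s1_inj : injective s1.
Proof. by move=> i j /idx_inj; rewrite !rep_l => /lshift_inj. Qed.

Lemma s2_inj : injective s2.
Proof. by move=> i j /idx_inj /rep_r_inj. Qed.

Lemma contractE d (T : measurableType d) (R : realType)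
   (f : k1.-tuple T -> R) (g : k2.-tuple T -> R) y :
  @Defs.contract _ T R k1 k2 N (tens *%R f g) y = f (sel s1 y) * g (sel s2 y).
Proof.
rewrite /Defs.contract /tens; congr (f _ * g _); apply: eq_from_tnth => i;
  by rewrite !tnth_mktuple (tnth_nth point).
Qed.

End Diag.
Arguments s1 {k1 k2 N}.
Arguments s2 {k1 k2 N}.
Arguments s1_inj {k1 k2 N}.
Arguments s2_inj {k1 k2 l N} HN.
Arguments contractE {k1 k2 N d T R}.

Section Analysis.
Context d (T : measurableType d) (R : realType).
Local Open Scope ereal_scope.

Lemma measurable_pow2 k (h : k.-tuple T -> R) (p : R) : measurable_fun setT h ->
  measurable_fun setT (fun x => (`|h x| `^ p)%:E).
Proof.
move=> mh; apply/measurable_EFinP.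
have H := measurableT_comp (measurable_powR p) (measurableT_comp (@normr_measurable R setT) mh).
exact: H.
Qed.

Lemma LnormE (S : measurableType d) (mu : {measure set S -> \bar R}) (p : R) (h : S -> R) :
  Lnorm mu p%:E (EFin \o h) = (\int[mu]_x (`|h x| `^ p)%:E) `^ p^-1.
Proof.
rewrite unlock; congr (_ `^ _); apply: eq_integral => x _ //.
Qed.

Lemma prodeZ (c : R) k (F : 'I_k -> \bar R) :
  \prod_(i < k) (c%:E * F i) = (c ^+ k)%:E * \prod_(i < k) F i.
Proof.
elim: k F => [|k IH] F; first by rewrite !big_ord0 mule1.
by rewrite !big_ord_recr IH /= exprSr EFinM muleACA.
Qed.

Lemma prod_mscale (m : {measure set T -> \bar R}) (c : {nonneg R}) k
  (nu : {measure set (k.-tuple T) -> \bar R}) :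
  is_product_measure m nu ->
  is_product_measure (mscale c m)
    (mscale (NngNum (exprn_ge0 k (ge0 c))) nu).
Proof.
move=> Hnu A mA; rewrite /mscale /= Hnu //.
by rewrite -prodeZ.
Qed.

Lemma int_sel (m : probability T R) k M (s : 'I_k -> 'I_M) (s_inj : injective s)
  (nuM : {measure set (M.-tuple T) -> \bar R}) (nuk : {measure set (k.-tuple T) -> \bar R}) :
  is_product_measure m nuM -> is_product_measure m nuk ->
  forall (phi : k.-tuple T -> \bar R), measurable_fun setT phi -> (forall x, 0 <= phi x) ->
  \int[nuM]_y phi (sel s y) = \int[nuk]_x phi x.
Proof.
move=> HM Hk phi mphi phi0.
rewrite [RHS](eq_measure_integral (pushforward nuM (sel s))); first last.
- move=> mc A mA _.
  exact: (prod_unique (sigma_finiteT m) Hk (sel_prod (probability_setT m) s_inj HM) mA).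
- by move=> mc; rewrite [RHS]ge0_integral_pushforward // preimage_setT.
- exact: measurable_sel.
Qed.

End Analysis.

Section MuComp.
Context d (T : measurableType d) (R : realType).
Local Open Scope ereal_scope.
Variable mu : {measure set T -> \bar R}.
Hypothesis smu : sigma_finite setT mu.
Definition muS : set T -> \bar R := mu.
HB.instance Definition _ := Measure.on muS.
HB.instance Definition _ := Measure_isSigmaFinite.Build _ _ _ muS smu.
Variables (P : probability T R) (c : {nonneg R}).
Hypothesis cP : forall A, measurable A -> c%:num%:E * P A <= mu A.
Variables (Ppow mupow : forall k, {measure set (k.-tuple T) -> \bar R}).
Hypotheses (HP : forall k, is_product_measure P (Ppow k))
  (Hmu : forall k, is_product_measure mu (mupow k)).

Lemma scaled_int k (phi : k.-tuple T -> \bar R) :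
  measurable_fun setT phi -> (forall x, 0 <= phi x) ->
  (c%:num ^+ k)%:E * \int[Ppow k]_x phi x <= \int[mupow k]_x phi x.
Proof.
move=> mphi phi0.
have := @tup_compare _ _ _ (mscale c P) muS cP
  (fun k => mscale (NngNum (exprn_ge0 k (ge0 c))) (Ppow k)) mupow
  (fun k => @prod_mscale _ _ _ P c k (Ppow k) (HP k)) Hmu k phi mphi phi0.
by rewrite ge0_integral_mscale.
Qed.

End MuComp.

Section Bound.
Context d (T : measurableType d) (R : realType).
Local Open Scope ereal_scope.
Variable mu : {measure set T -> \bar R}.
Hypothesis smu : sigma_finite setT mu.
Variables (P : probability T R) (c : R).
Hypothesis c_gt0 : (0 < c)%R.
Hypothesis cP : forall A, measurable A -> c%:E * P A <= mu A.
Variables (Ppow mupow : forall k, {measure set (k.-tuple T) -> \bar R}).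
Hypotheses (HP : forall k, is_product_measure P (Ppow k))
  (Hmu : forall k, is_product_measure mu (mupow k)).

Lemma scaled_L2 k (h : k.-tuple T -> R) : measurable_fun setT h ->
  (c `^ (k%:R / 2))%:E * Lnorm (Ppow k) 2%:E (EFin \o h) <=
  Lnorm (mupow k) 2%:E (EFin \o h).
Proof.
move=> mh; rewrite !LnormE.
have -> : (c `^ (k%:R / 2) = (c ^+ k) `^ 2^-1)%R.
  by rewrite powRrM powR_mulrn // ltW.
have I0 : 0 <= \int[Ppow k]_x (`|h x| `^ 2)%:E.
  by apply: integral_ge0 => x _; rewrite lee_fin powR_ge0.
have J0 : 0 <= \int[mupow k]_x (`|h x| `^ 2)%:E.
  by apply: integral_ge0 => x _; rewrite lee_fin powR_ge0.
have c0 : (0 <= c ^+ k)%R by rewrite exprn_ge0 // ltW.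
rewrite -poweR_EFin -poweRM ?lee_fin //.
apply: gt0_ler_poweR.
- by rewrite invr_ge0.
- by rewrite in_itv /= leey andbT mule_ge0.
- by rewrite in_itv /= leey andbT.
have := @scaled_int _ _ _ mu smu P (NngNum (ltW c_gt0)) cP Ppow mupow HP Hmu k
  (fun x => (`|h x| `^ 2)%:E) (@measurable_pow2 _ _ _ k h 2%R mh).
by apply => x; rewrite lee_fin powR_ge0.
Qed.

Lemma bound_one k1 k2 M (s1 : 'I_k1 -> 'I_M) (s2 : 'I_k2 -> 'I_M) :
  injective s1 -> injective s2 ->
  forall (f : k1.-tuple T -> R) (g : k2.-tuple T -> R),
  measurable_fun setT f -> measurable_fun setT g ->
  (c `^ ((k1 + k2)%:R / 2))%:E *
    `| \int[Ppow M]_y (f (sel s1 y) * g (sel s2 y))%:E |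
  <= Lnorm (mupow k1) 2%:E (EFin \o f) * Lnorm (mupow k2) 2%:E (EFin \o g).
Proof.
move=> i1 i2 f g mf mg.
pose F := fun y => f (sel s1 y); pose G := fun y => g (sel s2 y).
have mF : measurable_fun setT F := measurableT_comp mf (measurable_sel s1).
have mG : measurable_fun setT G := measurableT_comp mg (measurable_sel s2).
have h1 : `| \int[Ppow M]_y (F y * G y)%:E | <=
    Lnorm (Ppow M) 2%:E (EFin \o F) * Lnorm (Ppow M) 2%:E (EFin \o G).
  apply: le_trans (le_abse_integral _ _ _) _ => //.
    by apply/measurable_EFinP; exact: measurable_funM.
  have := @hoelder _ _ _ (Ppow M) F G 2%R 2%R mF mG (ltr0Sn R 1) (ltr0Sn R 1).
  rewrite Lnorm1; apply.
  by rewrite -div1r -splitr.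
have eF : Lnorm (Ppow M) 2%:E (EFin \o F) = Lnorm (Ppow k1) 2%:E (EFin \o f).
  rewrite !LnormE; congr (_ `^ _).
  apply: (@int_sel _ _ _ P k1 M s1 i1 (Ppow M) (Ppow k1) (HP M) (HP k1)
     (fun x => (`|f x| `^ 2)%:E) (@measurable_pow2 _ _ _ k1 f 2%R mf)).
  by move=> x; rewrite lee_fin powR_ge0.
have eG : Lnorm (Ppow M) 2%:E (EFin \o G) = Lnorm (Ppow k2) 2%:E (EFin \o g).
  rewrite !LnormE; congr (_ `^ _).
  apply: (@int_sel _ _ _ P k2 M s2 i2 (Ppow M) (Ppow k2) (HP M) (HP k2)
     (fun x => (`|g x| `^ 2)%:E) (@measurable_pow2 _ _ _ k2 g 2%R mg)).
  by move=> x; rewrite lee_fin powR_ge0.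
rewrite eF eG in h1.
have -> : (c `^ ((k1 + k2)%:R / 2) = c `^ (k1%:R / 2) * c `^ (k2%:R / 2))%R.
  by rewrite natrD mulrDl powRD //; apply/implyP => _; rewrite gt_eqF.
have a10 : (0 <= c `^ (k1%:R / 2))%R by rewrite powR_ge0.
have a20 : (0 <= c `^ (k2%:R / 2))%R by rewrite powR_ge0.
apply: le_trans.
  apply: lee_wpmul2l; first by rewrite lee_fin mulr_ge0.
  exact: h1.
rewrite EFinM muleACA.
apply: lee_pmul.
- by rewrite mule_ge0 // ?lee_fin // Lnorm_ge0.
- by rewrite mule_ge0 // ?lee_fin // Lnorm_ge0.
- exact: scaled_L2.
- exact: scaled_L2.
Qed.

End Bound.

Theorem lemma5 (R : realType) (d : measure_display) (E : measurableType d)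
  (mu : {measure set E -> \bar R})
  (a : nat -> R) (P : nat -> probability E R)
  (mu_pow : forall m : nat, {measure set (m.-tuple E) -> \bar R})
  (P_pow : nat -> forall m : nat, {measure set (m.-tuple E) -> \bar R})
  (k1 k2 l : nat) (f : k1.-tuple E -> R) (g : k2.-tuple E -> R) (n : nat) :
  nonatomic mu ->
  sigma_finite setT mu ->
  mu setT = +oo%E ->
  (forall m, (0 < m)%N -> 0 < a m) ->
  a @ \oo --> +oo ->
  (fun m => a m / m%:R) @ \oo --> 0 ->
  (forall m B, (0 < m)%N -> measurable B ->
     ((m%:R / a m)%:E * P m B <= (m.+1%:R / a m.+1)%:E * P m.+1 B)%E) ->
  (forall B, measurable B ->
     (fun m => ((m%:R / a m)%:E * P m B)%E) @ \oo --> mu B) ->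
  (forall m, is_product_measure mu (mu_pow m)) ->
  (forall j m, is_product_measure (P j) (P_pow j m)) ->
  (0 < k1)%N -> (0 < k2)%N -> (l <= minn k1 k2)%N ->
  measurable_fun setT f ->
  (Lnorm (mu_pow k1) 2%:E (EFin \o f) < +oo)%E ->
  measurable_fun setT g ->
  (Lnorm (mu_pow k2) 2%:E (EFin \o g) < +oo)%E ->
  (0 < n)%N ->
  (`| Fln n (a n) (P_pow n) l f g | <=
     Lnorm (mu_pow k1) 2%:E (EFin \o f) * Lnorm (mu_pow k2) 2%:E (EFin \o g))%E.
Proof.
move=> _ smu _ a_pos _ _ Hmono Hlim Hmu HP _ _ _ mf Nf mg Ng n_gt0.
set c := n%:R / a n.
have c_gt0 : 0 < c by rewrite divr_gt0 // ?ltr0n // a_pos.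
have cP : forall A, measurable A -> (c%:E * P n A <= mu A)%E.
  move=> A mA.
  pose u j := ((j%:R / a j)%:E * P j A)%E.
  have ndu : forall j, (n <= j)%N -> (u n <= u j)%E.
    elim=> [|j IH] Hj; first by move: n_gt0; rewrite leqn0 in Hj; rewrite (eqP Hj).
    case: (leqP n j) => Hnj; last by have -> : n = j.+1 by apply/eqP; rewrite eqn_leq Hj Hnj.
    apply: le_trans (IH Hnj) _.
    by apply: Hmono => //; exact: leq_trans n_gt0 Hnj.
  rewrite -(cvg_lim _ (Hlim A mA)) //.
  apply: lime_ge; first by apply/cvg_ex; exists (mu A); exact: Hlim.
  near=> j; apply: ndu; near: j; exact: nbhs_infty_ge.
set K := (Lnorm (mu_pow k1) 2%:E (EFin \o f) * Lnorm (mu_pow k2) 2%:E (EFin \o g))%E.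
have K0 : (0 <= K)%E by rewrite mule_ge0 // Lnorm_ge0.
have Kfin : K \is a fin_num.
  by rewrite fin_numM // ge0_fin_numE // Lnorm_ge0.
have HN : forall N, N \in diagrams k1 k2 l ->
   ((c `^ ((k1 + k2)%:R / 2))%:E *
    `| \int[P_pow n #|kept N|]_y (@Defs.contract _ _ _ k1 k2 N (tens *%R f g) y)%:E | <= K)%E.
  move=> N HN.
  under eq_integral do rewrite contractE.
  exact: (@bound_one _ _ _ mu smu (P n) c c_gt0 cP (P_pow n) mu_pow (HP n) Hmu
     k1 k2 _ _ _ (@s1_inj k1 k2 N) (s2_inj HN) f g mf mg).
rewrite /Fln -/c.
set D := #|diagrams k1 k2 l|.
have [D0|D0] := eqVneq D 0%N.
  by rewrite D0 invr0 mule0 mul0e abse0.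
pose I N := (\int[P_pow n #|kept N|]_y (@Defs.contract _ _ _ k1 k2 N (tens *%R f g) y)%:E)%E.
set A := c `^ ((k1 + k2)%:R / 2).
have A0 : 0 <= A by rewrite powR_ge0.
have B0 : 0 <= (D%:R)^-1 :> R by rewrite invr_ge0.
change (`|(A%:E * (D%:R^-1)%:E * \sum_(N in diagrams k1 k2 l) I N)%E| <= K)%E.
rewrite abseM gee0_abs; last by rewrite mule_ge0.
apply: (@le_trans _ _ ((A%:E * \sum_(N in diagrams k1 k2 l) `|I N|) * (D%:R^-1)%:E)%E).
  rewrite muleAC; apply: lee_wpmul2r; first by rewrite lee_fin.
  apply: lee_wpmul2l; first by rewrite lee_fin.
  exact: lee_abs_sum.
apply: (@le_trans _ _ ((\sum_(N in diagrams k1 k2 l) K) * (D%:R^-1)%:E)%E).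
  apply: lee_wpmul2r; first by rewrite lee_fin.
  rewrite ge0_sume_distrr; last by move=> N _; exact: abse_ge0.
  by apply: lee_sum => N HN'; exact: HN.
rewrite -(fineK Kfin) sumEFin sumr_const -EFinM lee_fin /D.
rewrite -[X in X / _]mulr_natr -mulrA mulfV ?mulr1 // pnatr_eq0.
exact: D0.
Unshelve. all: by end_near. Qed.
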